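(* Let $(p_\beta(x,y))$ be a discrete-time Markov chain on a finite state space $\mathcal{S}$, reversible with respect to $\mu$, let $A\subseteq\mathcal{S}$, and let $P_A$ be the matrix with entries $p^A_\beta(x,y)=p_\beta(x,y)$ for $x,y\in\mathcal{S}\setminus A$ and $0$ otherwise, assumed irreducible and aperiodic, with largest eigenvalue $1-\lambda_{0,A}$. Let $\psi_0\ge0$ be the (unique up to scaling) eigenvector of $P_A$ with eigenvalue $1-\lambda_{0,A}$. Then there exists $b\ge0$ such that, with $B=\{x\in\mathcal{S}:\psi_0(x)>b\}$, $$\frac{1}{|\mathcal{S}|}\,\frac{\sum_{(x,y)\in\partial B}\mu(x)p_\beta(x,y)}{\sum_{x\in B}\mu(x)}\le\lambda_{0,A}\le\frac{\sum_{(x,y)\in\partial B}\mu(x)p_\beta(x,y)}{\sum_{x\in B}\mu(x)} .$$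
   Context: $\partial B$ is the set of pairs $(x,y)$ with $p_\beta(x,y)>0$, $x\in B$, $y\notin B$. *)

(* Defs.v *)
From mathcomp Require Import all_boot all_order all_algebra.
Set Implicit Arguments. Unset Strict Implicit. Unset Printing Implicit Defensive.
Import Order.TTheory GRing.Theory Num.Theory.
Local Open Scope ring_scope.

Section MarkovDefs.
Variables (R : realFieldType) (T : finType).

Definition stochastic (p : T -> T -> R) :=
  (forall x y, 0 <= p x y) /\ (forall x, \sum_y p x y = 1).

Definition reversible (mu : T -> R) (p : T -> T -> R) :=
  forall x y, mu x * p x y = mu y * p y x.

Definition killed (p : T -> T -> R) (A : {set T}) : T -> T -> R :=
  fun x y => if (x \notin A) && (y \notin A) then p x y else 0.

Fixpoint mpow (Q : T -> T -> R) (n : nat) : T -> T -> R :=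
  match n with
  | 0 => fun x y => (x == y)%:R
  | n'.+1 => fun x y => \sum_z Q x z * mpow Q n' z y
  end.

Definition irreducible_on (Q : T -> T -> R) (D : {set T}) :=
  forall x y, x \in D -> y \in D -> exists n, (0 < n)%N /\ 0 < mpow Q n x y.

Definition period_one (Q : T -> T -> R) (x : T) :=
  forall d : nat,
    (forall n, (0 < n)%N -> 0 < mpow Q n x x -> (d %| n)%N) -> d = 1%N.

Definition aperiodic_on (Q : T -> T -> R) (D : {set T}) :=
  forall x, x \in D -> period_one Q x.

Definition eigenvector (Q : T -> T -> R) (e : R) (v : T -> R) :=
  (exists x, v x != 0) /\ (forall x, \sum_y Q x y * v y = e * v x).

Definition eigenvalue (Q : T -> T -> R) (e : R) := exists v, eigenvector Q e v.

Definition largest_eigenvalue (Q : T -> T -> R) (e : R) :=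
  eigenvalue Q e /\ (forall e', eigenvalue Q e' -> e' <= e).

Definition boundary (p : T -> T -> R) (B : {set T}) : {set T * T} :=
  [set xy | [&& 0 < p xy.1 xy.2, xy.1 \in B & xy.2 \notin B]].

Definition flow_ratio (mu : T -> R) (p : T -> T -> R) (B : {set T}) : R :=
  (\sum_(xy in boundary p B) mu xy.1 * p xy.1 xy.2) / (\sum_(x in B) mu x).

End MarkovDefs.

(* Main.v *)
Require Import Defs.
From mathcomp Require Import all_boot all_order all_algebra.
From mathcomp Require Import reals.
Import Order.TTheory GRing.Theory Num.Theory.
Local Open Scope ring_scope.
From mathcomp Require Import ring lra.
From mathcomp Require all_classical all_reals all_analysis.

Module Ana.
Import all_classical all_reals all_analysis.
Import numFieldNormedType.Exports.
Local Open Scope classical_set_scope.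
Local Open Scope ring_scope.
Section S.
Variables (R : realType) (T : finType) (mu : T -> R) (Q : T -> T -> R).
Definition Fq (w : T -> R) := \sum_x \sum_y mu x * w x * Q x y * w y.
Definition Gq (w : T -> R) := \sum_x mu x * w x ^+ 2.
Let n := #|T|.
Definition fr (v : 'rV[R]_n) : T -> R := fun x => v ord0 (enum_rank x).
Definition rf (w : T -> R) : 'rV[R]_n := \row_i w (enum_val i).
Lemma frK w : fr (rf w) = w.
Proof. by apply: funext => x; rewrite /fr /rf mxE enum_rankK. Qed.

Lemma fr_cont x : continuous (fun v : 'rV[R]_n => fr v x).
Proof. exact: coord_continuous. Qed.

Lemma sumcont (I : finType) (f : I -> 'rV[R]_n -> R) :
  (forall i, continuous (f i)) -> continuous (fun v => \sum_i f i v).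
Proof.
move=> H; apply: (@continuous_big _ _ +%R 0 xpredT _ _ (index_enum I) f).
  exact: add_continuous.
by move=> i _; apply: H.
Qed.

Lemma Fq_cont : continuous (fun v => Fq (fr v)).
Proof.
apply: sumcont => x; apply: sumcont => y v.
apply: (continuousM (s := fun v => mu x * fr v x * Q x y) (t := fun v => fr v y)); last exact: fr_cont.
apply: (continuousM (s := fun v => mu x * fr v x) (t := fun v => Q x y)); last exact: cst_continuous.
apply: (continuousM (s := fun v => mu x) (t := fun v => fr v x)); last exact: fr_cont.
exact: cst_continuous.
Qed.

Lemma Gq_cont : continuous (fun v => Gq (fr v)).
Proof.
apply: sumcont => x v.
apply: (continuousM (s := fun v => mu x) (t := fun v => fr v x ^+ 2)); first exact: cst_continuous.
under [X in {for _, continuous X}]funext => u do rewrite expr2.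
apply: (continuousM (s := fun v => fr v x) (t := fun v => fr v x)); exact: fr_cont.
Qed.

Hypothesis mu_pos : forall x, 0 < mu x.

Lemma sphere_max (v1 : T -> R) : Gq v1 = 1 ->
  exists c, Gq c = 1 /\ forall w, Gq w = 1 -> Fq w <= Fq c.
Proof.
move=> Hv1.
pose Sph := [set v : 'rV[R]_n | Gq (fr v) = 1].
pose K := 1 + \sum_x (mu x)^-1.
have Sne : Sph !=set0 by exists (rf v1); rewrite /Sph /= frK.
have Scl : closed Sph.
  apply: (@preimage_closed _ _ (fun v => Gq (fr v)) [set 1]).
    by move=> v _; apply: Gq_cont.
  exact: closed_eq.
have Bco : compact [set v : 'rV[R]_n | forall i, `[(- K), K]%classic (v ord0 i)].
  by apply: (@rV_compact _ _ (fun=> `[(- K), K]%classic)) => _; apply: segment_compact.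
have Ssub : Sph `<=` [set v : 'rV[R]_n | forall i, `[(- K), K]%classic (v ord0 i)].
  move=> v /= Hv i.
  have -> : v ord0 i = fr v (enum_val i) by rewrite /fr enum_valK.
  set x := enum_val i; set a := fr v x.
  have h1 : mu x * a ^+ 2 <= 1.
    rewrite -Hv /Gq (bigD1 x) //= lerDl; apply: sumr_ge0 => y _.
    by apply: mulr_ge0; [exact: ltW | exact: sqr_ge0].
  have h2 : a ^+ 2 <= (mu x)^-1 by rewrite -[leRHS]mulr1 ler_pdivlMl.
  have h3 : (mu x)^-1 <= \sum_y (mu y)^-1.
    rewrite (bigD1 x) //= lerDl; apply: sumr_ge0 => y _.
    by rewrite invr_ge0 ltW.
  have h4 : `|a| <= 1 + a ^+ 2.
    case: (ler0P a) => ha.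
      nra.
    nra.
  have : `|a| <= K by rewrite /K; lra.
  by rewrite ler_norml => /andP[? ?]; rewrite /= in_itv /=; apply/andP.
have cF : {within Sph, continuous (fun v => Fq (fr v))}.
  by apply: continuous_subspaceT; exact: Fq_cont.
have [c cS cmax] := EVT_max_rV Sne (subclosed_compact Scl Bco Ssub) cF.
exists (fr c); split; first by move: cS; rewrite inE.
move=> w Hw; have := cmax (rf w); rewrite frK; apply.
by rewrite inE /Sph /= frK.
Qed.

Definition Bq (u w : T -> R) := \sum_x \sum_y mu x * u x * Q x y * w y.
Definition Gb (u w : T -> R) := \sum_x mu x * u x * w x.

Lemma FqD u w : Fq (fun x => u x + w x) = Fq u + Bq u w + Bq w u + Fq w.
Proof.
rewrite /Fq /Bq -!big_split /=; apply: eq_bigr => x _.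
rewrite -!big_split /=; apply: eq_bigr => y _; ring.
Qed.

Lemma GqD u w : Gq (fun x => u x + w x) = Gq u + 2 * Gb u w + Gq w.
Proof.
rewrite /Gq /Gb mulr_sumr -!big_split /=; apply: eq_bigr => x _; ring.
Qed.

Lemma FqZ t u : Fq (fun x => t * u x) = t ^+ 2 * Fq u.
Proof.
rewrite /Fq mulr_sumr; apply: eq_bigr => x _.
rewrite mulr_sumr; apply: eq_bigr => y _; ring.
Qed.

Lemma GqZ t u : Gq (fun x => t * u x) = t ^+ 2 * Gq u.
Proof. rewrite /Gq mulr_sumr; apply: eq_bigr => x _; ring. Qed.

Lemma BqZ t u w : Bq u (fun x => t * w x) = t * Bq u w.
Proof.
rewrite /Bq mulr_sumr; apply: eq_bigr => x _.
rewrite mulr_sumr; apply: eq_bigr => y _; ring.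
Qed.

Lemma GbZ t u w : Gb u (fun x => t * w x) = t * Gb u w.
Proof. rewrite /Gb mulr_sumr; apply: eq_bigr => x _; ring. Qed.

Hypothesis Qsym : forall x y, mu x * Q x y = mu y * Q y x.

Lemma BqC u w : Bq w u = Bq u w.
Proof.
rewrite /Bq exchange_big /=; apply: eq_bigr => x _; apply: eq_bigr => y _.
have := Qsym x y; move=> h.
rewrite -[mu y * w y * Q y x * u x]mulrA -[mu y * w y * (Q y x * u x)]mulrA.
rewrite [w y * _]mulrA [w y * _]mulrC !mulrA -Qsym; ring.
Qed.

Lemma Gq_ge0 w : 0 <= Gq w.
Proof. apply: sumr_ge0 => x _; apply: mulr_ge0; [exact: ltW|exact: sqr_ge0]. Qed.

Lemma Gq0 w : Gq w = 0 -> forall x, w x = 0.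
Proof.
move=> /eqP; rewrite psumr_eq0; last first.
  by move=> x _; apply: mulr_ge0; [exact: ltW|exact: sqr_ge0].
move=> /allP H x; have := H x (mem_index_enum x).
by rewrite mulf_eq0 (gt_eqF (mu_pos x)) /= sqrf_eq0 => /eqP.
Qed.

Lemma Fq0 w : (forall x, w x = 0) -> Fq w = 0.
Proof.
move=> H; apply: big1 => x _; apply: big1 => y _; rewrite !H; ring.
Qed.

Lemma quad_zero (a b : R) : 0 <= a -> (forall t, 0 <= 2 * t * b + t ^+ 2 * a) -> b = 0.
Proof.
move=> a0 H; pose s := (a + 1)^-1.
have s0 : 0 < s by rewrite invr_gt0; lra.
have sa : s * a + s = 1 by rewrite -[X in _ + X]mulr1 -mulrDr mulVf //; apply/eqP; lra.
have := H (- b * s).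
have -> : 2 * (- b * s) * b + (- b * s) ^+ 2 * a = - (b ^+ 2 * s * (1 + s)).
  have -> : (- b * s) ^+ 2 * a = b ^+ 2 * s * (s * a) by ring.
  rewrite (_ : s * a = 1 - s); last by lra.
  ring.
rewrite oppr_ge0 => h.
have h2 : 0 < s * (1 + s) by apply: mulr_gt0 => //; lra.
have : b ^+ 2 <= 0.
  by rewrite -(pmulr_rle0 _ h2) [X in X <= 0]mulrC mulrA.
by move=> hb; apply/eqP; rewrite -sqrf_eq0 eq_le hb sqr_ge0.
Qed.

Lemma pos_eig (v0 : T -> R) : 0 < Fq v0 ->
  exists e v, 0 < e /\ eigenvector Q e v.
Proof.
move=> Fv0.
have G0 : 0 < Gq v0.
  rewrite lt_def Gq_ge0 andbT; apply/eqP => /Gq0 /Fq0 h.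
  by move: Fv0; rewrite h ltxx.
set s := (Num.sqrt (Gq v0))^-1.
have s2 : s ^+ 2 = (Gq v0)^-1 by rewrite /s exprVn sqr_sqrtr // ltW.
have Gv1 : Gq (fun x => s * v0 x) = 1 by rewrite GqZ s2 mulVf // gt_eqF.
have [c [Gc cmax]] := sphere_max _ Gv1.
set m := Fq c.
have m0 : 0 < m.
  have := cmax _ Gv1; rewrite FqZ s2 => h; apply: lt_le_trans h.
  by rewrite mulr_gt0 // invr_gt0.
have Nle : forall w, Fq w <= m * Gq w.
  move=> w; have [/Gq0 h|Gw] := eqVneq (Gq w) 0.
    by rewrite (Fq0 _ h) (_ : Gq w = 0) ?mulr0 // /Gq big1 // => x _; rewrite h; ring.
  have Gw0 : 0 < Gq w by rewrite lt_def Gw Gq_ge0.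
  set t := (Num.sqrt (Gq w))^-1.
  have t2 : t ^+ 2 = (Gq w)^-1 by rewrite /t exprVn sqr_sqrtr // ltW.
  have := cmax (fun x => t * w x); rewrite GqZ FqZ t2 mulVf ?gt_eqF // => /(_ erefl).
  by rewrite mulrC ler_pdivrMr.
exists m, c; split => //; split.
  case: (pickP (fun x => c x != 0)) => [x cx|h]; first by exists x.
  have : Gq c = 0.
    by apply: big1 => x _; have := h x; rewrite /= => /negbFE /eqP ->; ring.
  by rewrite Gc => /eqP; rewrite oner_eq0.
move=> z; pose d := fun x : T => (x == z)%:R : R.
have key : m * Gb c d - Bq c d = 0.
  apply: (quad_zero (m * Gq d - Fq d)); first by rewrite subr_ge0 Nle.
  move=> t; have := Nle (fun x => c x + t * d x).
  rewrite FqD GqD FqZ GqZ GbZ [Bq (fun _ => _) c]BqC BqZ Gc -/m => h.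
  rewrite -subr_ge0 in h; apply: le_trans h _; rewrite le_eqVlt; apply/orP; left; apply/eqP.
  ring.
have Gbd : Gb c d = mu z * c z.
  by rewrite /Gb (bigD1 z) //= /d eqxx mulr1 big1 ?addr0 // => x /negbTE ->; rewrite mulr0.
have Bqd : Bq c d = mu z * \sum_y Q z y * c y.
  rewrite /Bq mulr_sumr; apply: eq_bigr => u _.
  rewrite (bigD1 z) //= /d eqxx mulr1 big1 ?addr0; last first.
    by move=> y /negbTE ->; rewrite mulr0.
  by rewrite mulrAC (Qsym u z) mulrA.
move: key; rewrite Gbd Bqd => /eqP; rewrite subr_eq0 => /eqP h.
apply: (mulfI (lt0r_neq0 (mu_pos z))); rewrite /= -h; ring.
Qed.
End S.
End Ana.
Lemma gap_lemma (R : realFieldType) (T : finType) (f : T -> R) (xm : T) :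
  (forall y, 0 <= f y) -> (forall y, f y <= f xm) -> 0 < f xm ->
  exists b, [/\ 0 <= b, b < f xm &
    forall y, (f y <= b) || (b + f xm / #|T|%:R <= f y)].
Proof.
move=> f0 fm M0; set M := f xm; set N := #|T|; set d := M / N%:R.
have N0 : (0 < N)%N by apply/card_gt0P; exists xm.
have NR : 0 < (N%:R : R) by rewrite ltr0n.
have d0 : 0 < d by apply: divr_gt0.
have kd : forall k, (k <= N)%N -> k%:R * d <= M.
  move=> k hk; rewrite /d mulrA ler_pdivrMr // mulrC.
  by apply: ler_wpM2l; [exact: ltW | rewrite ler_nat].
have claim : forall k, (k <= N)%N ->
  (exists b, [/\ 0 <= b, b < M & forall y, (f y <= b) || (b + d <= f y)]) \/
  exists w, [/\ 0 <= w, (w == 0) || (w < k%:R * d) &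
     (k <= #|[set y | (0 < f y)%R && (f y <= w)%R]|)%N].
  elim=> [|k IH] hk.
    by right; exists 0; split; rewrite ?eqxx.
  have [//|[w [w0 wk wc]]] := IH (ltnW hk); first by left.
  have wM : w < M.
    case/orP: wk => [/eqP -> //|h]; apply: lt_le_trans h _; apply: kd; exact: ltnW.
  case: (boolP [forall y, (f y <= w) || (w + d <= f y)]) => [/forallP H|].
    by left; exists w; split.
  rewrite negb_forall => /existsP [y]; rewrite negb_or -!ltNge => /andP [wy yd].
  right; exists (f y); split; first exact: f0.
    apply/orP; right.
    have e : (k.+1)%:R * d = k%:R * d + d by rewrite -addn1 natrD mulrDl mul1r.
    have kd0 : 0 <= k%:R * d by apply: mulr_ge0; [exact: ler0n | exact: ltW].
    rewrite e; case/orP: wk => [/eqP w0'|h]; first by move: yd; rewrite w0'; lra.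
    lra.
  set S := [set y | (0 < f y) && (f y <= w)].
  set S' := [set y0 | (0 < f y0) && (f y0 <= f y)].
  have sub : y |: S \subset S'.
    apply/subsetP => z; rewrite !inE => /orP [/eqP ->|/andP [z0 zw]].
      by rewrite lexx andbT; apply: le_lt_trans wy.
    by rewrite z0 /=; apply: le_trans zw _; exact: ltW.
  have := subset_leq_card sub; rewrite cardsU1.
  have -> : (y \notin S) by rewrite inE negb_and -!ltNge wy orbT.
  move=> h; apply: leq_trans h; by rewrite add1n ltnS.
have [//|[w [w0 wk wc]]] := claim N (leqnn N); exfalso.
set S := [set y | (0 < f y) && (f y <= w)] in wc.
have xmS : xm \in S.
  apply/negPn/negP => nS.
  have : S \subset [set~ xm].
    by apply/subsetP => z zS; rewrite !inE; apply/negP => /eqP zx; rewrite -zx zS in nS.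
  move/subset_leq_card; rewrite cardsC1 -/N => h.
  have := leq_trans wc h; rewrite -ltnS prednK //; by rewrite ltnn.
move: xmS; rewrite inE => /andP [_ Mw].
have eM : N%:R * d = M by rewrite /d; field; exact: lt0r_neq0.
case/orP: wk => [/eqP w0'|].
  by move: Mw; rewrite w0' => /(lt_le_trans M0); rewrite ltxx.
by rewrite eM => h; have := lt_le_trans h Mw; rewrite ltxx.
Qed.
Section Main.
Variables (R : realType) (T : finType) (p : T -> T -> R) (mu : T -> R)
  (A : {set T}) (lam : R) (psi : T -> R).
Hypotheses (pnn : forall x y, 0 <= p x y) (psum : forall x, \sum_y p x y = 1)
  (mupos : forall x, 0 < mu x) (rev : reversible mu p) (lam1 : lam != 1)
  (psinn : forall x, 0 <= psi x)
  (eig : forall x, \sum_y killed p A x y * psi y = (1 - lam) * psi x).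

Lemma psiA x : x \in A -> psi x = 0.
Proof.
move=> xA; have := eig x; rewrite big1; last first.
  by move=> y _; rewrite /killed xA /= mul0r.
move=> /esym /eqP; rewrite mulf_eq0 subr_eq0 eq_sym (negbTE lam1) /=.
by move/eqP.
Qed.

Lemma kpsi x : x \notin A -> \sum_y killed p A x y * psi y = \sum_y p x y * psi y.
Proof.
move=> xA; apply: eq_bigr => y _; rewrite /killed xA /=.
by case: ifP => // /negbFE yA; rewrite (psiA y yA) !mulr0.
Qed.

Lemma eqx x : x \notin A -> lam * psi x = \sum_y p x y * (psi x - psi y).
Proof.
move=> xA; have := eig x; rewrite kpsi // => h.
under eq_bigr do rewrite mulrBr.
rewrite sumrB h -mulr_suml psum mul1r; ring.
Qed.

Variable b : R.
Hypothesis b0 : 0 <= b.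
Let B := [set x | b < psi x].

Lemma BnA x : x \in B -> x \notin A.
Proof.
rewrite /B inE => hb; apply/negP => xA; move: hb; rewrite (psiA x xA).
by rewrite ltNge b0.
Qed.

Lemma swap_sum (g : T -> T -> R) :
  \sum_(x in B) \sum_(y in B) g x y = \sum_(x in B) \sum_(y in B) g y x.
Proof. by rewrite exchange_big. Qed.

Lemma ident : lam * \sum_(x in B) mu x * psi x =
  \sum_(x in B) \sum_(y | y \notin B) mu x * p x y * (psi x - psi y).
Proof.
rewrite mulr_sumr.
have -> : \sum_(x in B) lam * (mu x * psi x) =
   \sum_(x in B) \sum_y mu x * p x y * (psi x - psi y).
  apply: eq_bigr => x xB; rewrite mulrCA eqx ?BnA // mulr_sumr.
  by apply: eq_bigr => y _; rewrite mulrA.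
have -> : \sum_(x in B) \sum_y mu x * p x y * (psi x - psi y) =
   \sum_(x in B) \sum_(y in B) mu x * p x y * (psi x - psi y) +
   \sum_(x in B) \sum_(y | y \notin B) mu x * p x y * (psi x - psi y).
  rewrite -big_split /=; apply: eq_bigr => x _.
  by rewrite (bigID (fun y => y \in B)).
rewrite (_ : \sum_(x in B) \sum_(y in B) _ = 0) ?add0r //.
have h : forall x y, mu x * p x y * (psi x - psi y) =
   mu x * p x y * psi x - mu y * p y x * psi y.
  by move=> x y; rewrite -rev; ring.
under eq_bigr do under eq_bigr do rewrite h.
rewrite (eq_bigr (fun x => \sum_(y in B) mu x * p x y * psi x - \sum_(y in B) mu y * p y x * psi y)); last first.
  by move=> x _; rewrite sumrB.
rewrite sumrB; apply/eqP; rewrite subr_eq0; apply/eqP.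
by rewrite swap_sum.
Qed.

Lemma numE : \sum_(xy in boundary p B) mu xy.1 * p xy.1 xy.2 =
  \sum_(x in B) \sum_(y | y \notin B) mu x * p x y.
Proof.
rewrite big_mkcond /=.
transitivity (\sum_(xy : T * T) (fun x y => if (x, y) \in boundary p B then mu x * p x y else 0) xy.1 xy.2).
  by apply: eq_bigr => -[x y] _.
rewrite -(pair_bigA _ (fun x y => if (x, y) \in boundary p B then mu x * p x y else 0)) /=.
rewrite [RHS]big_mkcond /=; apply: eq_bigr => x _.
rewrite [in RHS]big_mkcond /=; case: ifP => xB.
  apply: eq_bigr => y _; rewrite /boundary inE /= xB /=.
  case: (y \in B) => /=; rewrite ?andbF ?andbT //.
  have := pnn x y; rewrite le_eqVlt => /orP [/eqP <-|->] /=; [by rewrite ltxx mulr0 | by []].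
by apply: big1 => y _; rewrite /boundary inE /= xB /= andbF.
Qed.


Lemma psiB x : x \in B -> 0 < psi x.
Proof. by rewrite /B inE => h; apply: le_lt_trans h. Qed.

Lemma ppsi x : x \notin A -> \sum_y p x y * psi y = (1 - lam) * psi x.
Proof. by move=> xA; rewrite -kpsi // eig. Qed.

Lemma amgm (a s t : R) : 0 <= a -> 0 < s -> 0 < t ->
  a <= (a * (t / s) + a * (s / t)) / 2.
Proof.
move=> a0 s0 t0.
have -> : (a * (t / s) + a * (s / t)) / 2 = a + a * (t - s) ^+ 2 / (2 * s * t).
  by field; rewrite !lt0r_neq0.
rewrite lerDl; apply: divr_ge0; first by apply: mulr_ge0 => //; exact: sqr_ge0.
by apply: mulr_ge0; [apply: mulr_ge0|]; rewrite ?ltW.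
Qed.

Lemma upper : B != set0 -> lam <= flow_ratio mu p B.
Proof.
move=> Bn0.
have D0 : 0 < \sum_(x in B) mu x.
  case/set0Pn: Bn0 => x xB; rewrite (bigD1 x) //=.
  have := mupos x; have : 0 <= \sum_(i in B | i != x) mu i.
    by apply: sumr_ge0 => i _; exact: ltW.
  lra.
rewrite /flow_ratio numE ler_pdivlMr //.
set D := \sum_(x in B) mu x.
set S := \sum_(x in B) \sum_(y in B) mu x * p x y.
have NE : \sum_(x in B) \sum_(y | y \notin B) mu x * p x y = D - S.
  rewrite /S /D -sumrB; apply: eq_bigr => x _.
  have := psum x; rewrite (bigID (fun y => y \in B)) /= => h.
  rewrite -!mulr_sumr.
  have -> : \sum_(y | y \notin B) p x y = 1 - \sum_(y in B) p x y by rewrite -h; ring.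
  ring.
set S1 := \sum_(x in B) \sum_(y in B) mu x * p x y * (psi y / psi x).
have h1 : S <= (S1 + S1) / 2.
  have e : S1 = \sum_(x in B) \sum_(y in B) mu x * p x y * (psi x / psi y).
    rewrite /S1 swap_sum; apply: eq_bigr => x _; apply: eq_bigr => y _.
    by rewrite rev.
  rewrite {1}e /S1 -big_split /= mulr_suml; apply: ler_sum => x xB.
  rewrite -big_split /= mulr_suml; apply: ler_sum => y yB.
  apply: amgm; [by apply: mulr_ge0; [exact: ltW|] | exact: psiB | exact: psiB].
have h2 : S1 <= (1 - lam) * D.
  rewrite /D mulr_sumr; apply: ler_sum => x xB.
  have px := psiB x xB.
  have -> : \sum_(y in B) mu x * p x y * (psi y / psi x) =
     mu x / psi x * \sum_(y in B) p x y * psi y.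
    rewrite mulr_sumr; apply: eq_bigr => y _; field; exact: lt0r_neq0.
  have : \sum_(y in B) p x y * psi y <= \sum_y p x y * psi y.
    rewrite [X in _ <= X](bigID (fun y => y \in B)) /= lerDl.
    by apply: sumr_ge0 => y _; apply: mulr_ge0.
  rewrite ppsi ?BnA // => h.
  have hm : 0 <= mu x / psi x by apply: divr_ge0; apply: ltW.
  apply: le_trans (ler_wpM2l hm h) _.
  rewrite le_eqVlt; apply/orP; left; apply/eqP; field; exact: lt0r_neq0.
rewrite NE.
have : (1 - lam) * D = D - lam * D by ring.
have : (S1 + S1) / 2 = S1 by field.
lra.
Qed.

Lemma lower (xm : T) : (forall y, psi y <= psi xm) -> b < psi xm ->
  (forall y, (psi y <= b) || (b + psi xm / #|T|%:R <= psi y)) ->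
  (#|T|%:R)^-1 * flow_ratio mu p B <= lam.
Proof.
move=> Hm bM gap.
set M := psi xm; set n := (#|T|%:R : R).
have n0 : 0 < n by rewrite /n ltr0n; apply/card_gt0P; exists xm.
have M0 : 0 < M by apply: le_lt_trans bM.
have xmB : xm \in B by rewrite /B inE.
have P0 : 0 < \sum_(x in B) mu x * psi x.
  rewrite (bigD1 xm) //=.
  have : 0 < mu xm * psi xm by apply: mulr_gt0.
  have : 0 <= \sum_(i in B | i != xm) mu i * psi i.
    by apply: sumr_ge0 => i _; apply: mulr_ge0; [exact: ltW|].
  lra.
have D0 : 0 < \sum_(x in B) mu x.
  rewrite (bigD1 xm) //=.
  have := mupos xm; have : 0 <= \sum_(i in B | i != xm) mu i.
    by apply: sumr_ge0 => i _; exact: ltW.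
  lra.
set P := \sum_(x in B) mu x * psi x.
set D := \sum_(x in B) mu x.
set N := \sum_(x in B) \sum_(y | y \notin B) mu x * p x y.
have N0 : 0 <= N.
  by apply: sumr_ge0 => x _; apply: sumr_ge0 => y _; apply: mulr_ge0; [exact: ltW|].
have h1 : M / n * N <= lam * P.
  rewrite /P ident /N mulr_sumr; apply: ler_sum => x xB.
  rewrite mulr_sumr; apply: ler_sum => y yB.
  have hx : b + M / n <= psi x.
    have := gap x; rewrite /B inE in xB; rewrite leNgt xB /=.
    done.
  have hy : psi y <= b by move: yB; rewrite /B inE -leNgt.
  rewrite mulrC; apply: ler_wpM2l; first by apply: mulr_ge0; [exact: ltW|].
  lra.
have lam0 : 0 <= lam.
  have : 0 <= lam * P.
    apply: le_trans h1; apply: mulr_ge0 => //; apply: divr_ge0; exact: ltW.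
  by rewrite pmulr_lge0.
have h2 : P <= M * D.
  rewrite /P /D mulr_sumr; apply: ler_sum => x _.
  by rewrite mulrC; apply: ler_wpM2r; [exact: ltW|].
rewrite /flow_ratio numE -/N -/D.
have -> : n^-1 * (N / D) = (M / n * N) / (M * D).
  by field; rewrite !lt0r_neq0.
rewrite ler_pdivrMr; last by apply: mulr_gt0.
apply: le_trans h1 _.
by apply: ler_wpM2l.
Qed.

End Main.

Theorem lemma6 (R : realType) (T : finType) (p : T -> T -> R) (mu : T -> R)
    (A : {set T}) (lam : R) (psi0 : T -> R) :
  stochastic p ->
  (forall x, 0 < mu x) ->
  reversible mu p ->
  (exists x, x \notin A) ->
  irreducible_on (killed p A) (~: A) ->
  aperiodic_on (killed p A) (~: A) ->
  largest_eigenvalue (killed p A) (1 - lam) ->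
  (forall x, 0 <= psi0 x) ->
  eigenvector (killed p A) (1 - lam) psi0 ->
  exists b : R, 0 <= b /\
    let B := [set x | b < psi0 x] in
    [/\ B != set0,
        (#|T|%:R)^-1 * flow_ratio mu p B <= lam
      & lam <= flow_ratio mu p B].
Proof.
move=> [pnn psum] mupos rev [x0 x0A] irr _ [_ larg] psinn [[xn psixn] eig].
have Qnn : forall x y, 0 <= killed p A x y.
  by move=> x y; rewrite /killed; case: ifP.
have Qsym : forall x y, mu x * killed p A x y = mu y * killed p A y x.
  move=> x y; rewrite /killed [(y \notin A) && _]andbC.
  by case: ifP => _; [exact: rev | rewrite !mulr0].
have lam1 : lam != 1.
  apply/eqP => l1.
  have x0D : x0 \in ~: A by rewrite inE.
  have [n [n0 hn]] := irr x0 x0 x0D x0D.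
  case: n n0 hn => // n _ /= hn.
  have [z hz] : exists z, killed p A x0 z != 0.
    case: (pickP (fun z => killed p A x0 z != 0)) => [z hz|h]; first by exists z.
    move: hn; rewrite big1 ?ltxx // => z _.
    by have := h z; rewrite /= => /negbFE/eqP ->; rewrite mul0r.
  have Qz : 0 < killed p A x0 z by rewrite lt_def hz Qnn.
  pose v0 := fun y => ((y == x0) || (y == z))%:R : R.
  have v0nn : forall y, 0 <= v0 y by move=> y; exact: ler0n.
  have tnn : forall x y, 0 <= mu x * v0 x * killed p A x y * v0 y.
    move=> x y; apply: mulr_ge0 => //; apply: mulr_ge0 => //.
    by apply: mulr_ge0 => //; exact: ltW.
  have Fv : 0 < Ana.Fq R T mu (killed p A) v0.
    rewrite /Ana.Fq (bigD1 x0) //= (bigD1 z) //=.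
    have t : 0 < mu x0 * v0 x0 * killed p A x0 z * v0 z.
      by rewrite /v0 !eqxx orbT /= !mulr1; apply: mulr_gt0.
    have r1 : 0 <= \sum_(j | j != z) mu x0 * v0 x0 * killed p A x0 j * v0 j.
      by apply: sumr_ge0 => j _.
    have r2 : 0 <= \sum_(i | i != x0) \sum_j mu i * v0 i * killed p A i j * v0 j.
      by apply: sumr_ge0 => i _; apply: sumr_ge0 => j _.
    lra.
  have [e [v [e0 ev]]] := Ana.pos_eig R T mu (killed p A) mupos Qsym v0 Fv.
  have := larg e (ex_intro _ v ev); rewrite l1 subrr => h.
  by move: (lt_le_trans e0 h); rewrite ltxx.
have Pxn : 0 < psi0 xn by rewrite lt_def psixn psinn.
case: (@arg_maxP _ _ T xn xpredT psi0 isT) => xm _ Hxm.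
have Hxm' : forall y, psi0 y <= psi0 xm by move=> y; exact: Hxm.
have M0 : 0 < psi0 xm by apply: lt_le_trans Pxn (Hxm' xn).
have [b [b0 bM gapb]] := gap_lemma R T psi0 xm psinn Hxm' M0.
exists b; split => //=; split.
- by apply/set0Pn; exists xm; rewrite inE.
- exact: (lower R T p mu A lam psi0 pnn psum mupos rev lam1 psinn eig b b0 xm Hxm' bM gapb).
- apply: (upper R T p mu A lam psi0 pnn psum mupos rev lam1 psinn eig b b0).
  by apply/set0Pn; exists xm; rewrite inE.
Qed.
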